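(* Let $t\ge1$, $w\in\mathbb{R}^t_{++}$, $\rho>0$ and $d\in\mathbb{R}^t_{++}$. Let $d^w\in\mathbb{R}^t$ be given by $d^w_i:=d_i/w_i$, and let $\Pi$ be a permutation matrix such that $\Pi d^w$ is sorted in non-increasing order. Put $\tilde d=\Pi d$, $\tilde w=\Pi w$, and for $i=1,\dots,t$, $$s_i=\sum_{j=1}^i\tilde w_j\tilde d_j,\qquad L_i=\sum_{j=1}^i\tilde w_j^2,\qquad \alpha_i=\frac{s_i}{1+2\rho L_i},$$ and let $\bar\alpha=\max_{1\le i\le t}\alpha_i$. Then $$x(d):=\arg\min_{x\in\mathbb{R}^t_+}\Big\{\frac12\|x-d\|^2+\rho\|w\circ x\|_1^2\Big\}=(d-2\rho\bar\alpha w)^+ .$$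
   Context: $\circ$ is the Hadamard product; for a vector $z$, $z^+$ denotes the entrywise positive part $\max\{z_i,0\}$. *)

(* Defs.v *)
From HB Require Import structures.
From mathcomp Require Import all_boot all_order all_algebra all_fingroup.
Set Implicit Arguments. Unset Strict Implicit. Unset Printing Implicit Defensive.
Import Order.TTheory GRing.Theory Num.Theory.
Local Open Scope ring_scope.

Definition pospart (R : realFieldType) (t : nat) (z : 'I_t -> R) : 'I_t -> R :=
  fun i => Num.max (z i) 0.

Definition objective (R : realFieldType) (t : nat) (rho : R) (w d x : 'I_t -> R) : R :=
  2^-1 * (\sum_(i < t) (x i - d i) ^+ 2)
  + rho * (\sum_(i < t) `|w i * x i|) ^+ 2.

(* the permuted vectors: (Pi v)_i = v (sigma i) *)
Definition permv (R : Type) (t : nat) (s : 'S_t) (v : 'I_t -> R) : 'I_t -> R :=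
  fun i => v (s i).

(* s_i, L_i, alpha_i (indices i : 'I_t correspond to 1..t via i+1) *)
Definition s_seq (R : realFieldType) (t : nat) (wt dt : 'I_t -> R) (i : 'I_t) : R :=
  \sum_(j < t | (j <= i)%N) wt j * dt j.
Definition L_seq (R : realFieldType) (t : nat) (wt : 'I_t -> R) (i : 'I_t) : R :=
  \sum_(j < t | (j <= i)%N) wt j ^+ 2.
Definition alpha_seq (R : realFieldType) (t : nat) (rho : R) (wt dt : 'I_t -> R)
  (i : 'I_t) : R :=
  s_seq wt dt i / (1 + 2 * rho * L_seq wt i).

Definition maxI (R : realFieldType) (t : nat) (ht : (0 < t)%N) (a : 'I_t -> R) : R :=
  \big[Num.max/a (Ordinal ht)]_(i < t) a i.

(* Main.v *)
Require Import Defs.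
From Stdlib Require Import FunctionalExtensionality.
From mathcomp Require Import all_boot all_order all_algebra all_fingroup.
From mathcomp Require Import ring lra.
Import Order.TTheory GRing.Theory Num.Theory.
Local Open Scope ring_scope.

Lemma bigmax_ub (R : realFieldType) (I : eqType) (r : seq I) (F : I -> R) x0 i :
  i \in r -> F i <= \big[Num.max/x0]_(j <- r) F j.
Proof.
elim: r => [//|j r IH]; rewrite inE big_cons => /orP[/eqP->|/IH H].
  by rewrite le_max lexx.
by rewrite le_max H orbT.
Qed.

Lemma bigmax_ex (R : realFieldType) (t : nat) (F : 'I_t -> R) x0 :
  exists k, \big[Num.max/F x0]_(j < t) F j = F k.
Proof.
apply: (big_ind (fun y => exists k, y = F k)); first by exists x0.
  move=> y z [k1 ->] [k2 ->].
  case/orP: (le_total (F k1) (F k2)) => h.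
    by exists k2; rewrite max_r.
  by exists k1; rewrite max_l.
by move=> i _; exists i.
Qed.

Lemma key (R : realFieldType) (t : nat) (wt dt : 'I_t -> R) (rho A : R)
  (hw : forall i, 0 < wt i) (hd : forall i, 0 < dt i) (hrho : 0 < rho)
  (hsort : forall i j : 'I_t, (i <= j)%N -> dt j / wt j <= dt i / wt i)
  (hA : forall i, alpha_seq rho wt dt i <= A) (k : 'I_t)
  (hk : alpha_seq rho wt dt k = A) :
  \sum_(j < t) wt j * Num.max (dt j - 2 * rho * A * wt j) 0 = A.
Proof.
set a := 2 * rho * A.
have Dpos : forall i, 0 < 1 + 2 * rho * L_seq wt i.
  move=> i; have L0 : 0 <= L_seq wt i by apply: sumr_ge0 => j _; apply: sqr_ge0.
  have := mulr_ge0 (ltW hrho) L0; lra.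
have hsum : forall i : 'I_t, \sum_(j < t | (j <= i)%N) wt j * (dt j - a * wt j)
    = s_seq wt dt i - a * L_seq wt i.
  move=> i; rewrite /s_seq /L_seq mulr_sumr -sumrB; apply: eq_bigr => j _; ring.
have hle : forall i : 'I_t, \sum_(j < t | (j <= i)%N) wt j * (dt j - a * wt j) <= A.
  move=> i; have := hA i; rewrite /alpha_seq ler_pdivrMr // hsum.
  have -> : A * (1 + 2 * rho * L_seq wt i) = A + a * L_seq wt i by rewrite /a; ring.
  lra.
have heq : \sum_(j < t | (j <= k)%N) wt j * (dt j - a * wt j) = A.
  have hs : s_seq wt dt k = A * (1 + 2 * rho * L_seq wt k).
    by rewrite -hk /alpha_seq divfK // lt0r_neq0.
  rewrite hsum hs /a; ring.
have hA0 : 0 <= A.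
  rewrite -hk /alpha_seq divr_ge0 // ?(ltW (Dpos k)) //.
  apply: sumr_ge0 => j _; apply: mulr_ge0; exact: ltW.
apply/eqP; rewrite eq_le; apply/andP; split.
  case: (pickP (fun j : 'I_t => a * wt j < dt j)) => [i0 Pi0 | noP].
    case: (@arg_maxnP _ i0 (fun j : 'I_t => a * wt j < dt j) (fun j : 'I_t => nat_of_ord j) Pi0) => im Pim maxim.
    rewrite (eq_bigr (fun j : 'I_t => if (j <= im)%N then wt j * (dt j - a * wt j) else 0)).
      by rewrite -big_mkcond /=; exact: hle.
    move=> j _; case: ifP => hj.
      rewrite max_l // subr_ge0; apply: ltW.
      have h1 : a < dt im / wt im by rewrite ltr_pdivlMr.
      have h2 : a < dt j / wt j by apply: lt_le_trans h1 (hsort _ _ hj).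
      by rewrite -ltr_pdivlMr.
    rewrite max_r ?mulr0 // subr_le0 leNgt; apply/negP => Pj.
    by have := maxim j Pj; rewrite /geq /= hj.
  rewrite big1 // => j _; rewrite max_r ?mulr0 // subr_le0 leNgt noP //.
rewrite -{1}heq [X in _ <= X](bigID (fun j : 'I_t => (j <= k)%N)) /=.
rewrite -[X in X <= _]addr0; apply: lerD.
  apply: ler_sum => j _; rewrite ler_wpM2l ?(ltW (hw j)) //.
  by rewrite le_max lexx.
apply: sumr_ge0 => j _; apply: mulr_ge0; first exact: ltW.
by rewrite le_max lexx orbT.
Qed.

Theorem proposition3p3 (R : realFieldType) (t : nat) (ht : (0 < t)%N)
  (w : 'I_t -> R) (hw : forall i, 0 < w i) (rho : R) (hrho : 0 < rho)
  (d : 'I_t -> R) (hd : forall i, 0 < d i) (sigma : 'S_t)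
  (hsort : forall i j : 'I_t, (i <= j)%N ->
     d (sigma j) / w (sigma j) <= d (sigma i) / w (sigma i)) :
  let dt := permv sigma d in
  let wt := permv sigma w in
  let abar := maxI ht (alpha_seq rho wt dt) in
  let p := pospart (fun i => d i - 2 * rho * abar * w i) in
  (forall i, 0 <= p i) /\
  (forall x : 'I_t -> R, (forall i, 0 <= x i) ->
     objective rho w d p <= objective rho w d x) /\
  (forall x : 'I_t -> R, (forall i, 0 <= x i) ->
     objective rho w d x <= objective rho w d p -> x = p).
Proof.
move=> dt wt abar p.
have [k hk] := @bigmax_ex _ _ (alpha_seq rho wt dt) (Ordinal ht).
have hA : forall i, alpha_seq rho wt dt i <= abar.
  move=> i; rewrite /abar /maxI; apply: bigmax_ub; exact: mem_index_enum.
have hS : \sum_i w i * p i = abar.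
  rewrite (reindex_inj (@perm_inj _ sigma)) /=.
  exact: (@key _ _ wt dt rho abar (fun i => hw (sigma i)) (fun i => hd (sigma i)) hrho hsort hA k (esym hk)).
have p0 : forall i, 0 <= p i by move=> i; rewrite /p /pospart le_max lexx orbT.
have objE : forall x : 'I_t -> R, (forall i, 0 <= x i) ->
    objective rho w d x = 2^-1 * (\sum_i (x i - d i) ^+ 2) + rho * (\sum_i w i * x i) ^+ 2.
  move=> x hx; rewrite /objective; congr (_ + rho * _ ^+ 2); apply: eq_bigr => i _.
  by rewrite ger0_norm // mulr_ge0 // ltW.
have gap : forall x : 'I_t -> R, (forall i, 0 <= x i) ->
    objective rho w d p + 2^-1 * \sum_i (x i - p i) ^+ 2 <= objective rho w d x.
  move=> x hx; rewrite !objE // hS.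
  set U := \sum_i (p i - d i) * (x i - p i).
  set Q := \sum_i (x i - p i) ^+ 2.
  set Sx := \sum_i w i * x i.
  have E1 : \sum_i (x i - d i) ^+ 2 = \sum_i (p i - d i) ^+ 2 + 2 * U + Q.
    rewrite /U /Q mulr_sumr -big_split /= -big_split /=; apply: eq_bigr => i _; ring.
  have E2 : \sum_i (p i - d i + 2 * rho * abar * w i) * (x i - p i)
      = U + 2 * rho * abar * (Sx - abar).
    have hV : Sx - abar = \sum_i w i * (x i - p i).
      by rewrite -hS /Sx -sumrB; apply: eq_bigr => i _; ring.
    rewrite hV mulr_sumr /U -big_split /=; apply: eq_bigr => i _; ring.
  have G0 : 0 <= \sum_i (p i - d i + 2 * rho * abar * w i) * (x i - p i).
    apply: sumr_ge0 => i _; rewrite /p /pospart.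
    case: (boolP (0 <= d i - 2 * rho * abar * w i)) => h; last rewrite -ltNge in h.
      rewrite (max_l h).
      have -> : d i - 2 * rho * abar * w i - d i + 2 * rho * abar * w i = 0 by ring.
      by rewrite mul0r.
    rewrite (max_r (ltW h)) subr0; apply: mulr_ge0 => //.
    have := ltW h; lra.
  rewrite E2 in G0.
  have V0 : 0 <= rho * (Sx - abar) ^+ 2 by apply: mulr_ge0; [exact: ltW | exact: sqr_ge0].
  rewrite E1.
  have -> : 2^-1 * (\sum_i (p i - d i) ^+ 2 + 2 * U + Q) + rho * Sx ^+ 2
     = 2^-1 * (\sum_i (p i - d i) ^+ 2) + rho * abar ^+ 2 + 2^-1 * Q
       + (U + 2 * rho * abar * (Sx - abar)) + rho * (Sx - abar) ^+ 2.
    by field.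
  rewrite -subr_ge0; set Y := (_ - _).
  have -> : Y = (U + 2 * rho * abar * (Sx - abar)) + rho * (Sx - abar) ^+ 2 by rewrite /Y; ring.
  exact: addr_ge0.
have Q0 : forall x : 'I_t -> R, 0 <= 2^-1 * \sum_i (x i - p i) ^+ 2.
  move=> x; apply: mulr_ge0; first by rewrite invr_ge0 ler0n.
  by apply: sumr_ge0 => i _; apply: sqr_ge0.
split; first exact: p0.
split.
  move=> x hx; have := gap x hx; have := Q0 x; lra.
move=> x hx hle.
have hQ : \sum_i (x i - p i) ^+ 2 = 0.
  apply/eqP; rewrite eq_le sumr_ge0 ?andbT; last by move=> i _; apply: sqr_ge0.
  have := gap x hx; have := Q0 x; rewrite -(pmulr_rge0 _ (_ : 0 < 2^-1)) ?invr_gt0 ?ltr0n //.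
  move=> _ H; have : 2^-1 * \sum_i (x i - p i) ^+ 2 <= 0 by lra.
  by rewrite pmulr_rle0 // invr_gt0 ltr0n.
apply: functional_extensionality => i.
have := @psumr_eq0P _ _ _ _ (fun i _ => sqr_ge0 (x i - p i)) hQ i isT.
by move=> /eqP; rewrite sqrf_eq0 subr_eq0 => /eqP.
Qed.
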